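(* Let $q\ge 2$ and $e\ge 0$ be integers. The function $$B_H(n,e)=\frac{q^n}{\sum_{i=0}^e \binom ni (q-1)^i}$$ is log-convex in $n$, i.e. $B_H(n_1,e)B_H(n_2,e)\le B_H(n_1-1,e)B_H(n_2+1,e)$ for all integers $1\le n_1\le n_2$.
   Context: A positive function $f(j)$ of an integer argument is called log-convex if $f(j_1)f(j_2)\le f(j_1-1)f(j_2+1)$ for all $j_1\le j_2$ in the support of $f$. *)

(* Defs.v *)
From mathcomp Require Import all_boot all_order all_algebra.
Set Implicit Arguments. Unset Strict Implicit. Unset Printing Implicit Defensive.
Import Order.TTheory GRing.Theory Num.Theory.
Local Open Scope ring_scope.

Definition hamming_ball (q n e : nat) : rat :=
  \sum_(0 <= i < e.+1) ('C(n, i) * (q - 1) ^ i)%N%:R.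

Definition B_H (q n e : nat) : rat := (q ^ n)%N%:R / hamming_ball q n e.

(* Main.v *)
Require Import Defs.
From mathcomp Require Import all_boot all_order all_algebra.
From mathcomp Require Import zify ring.
Import Order.TTheory GRing.Theory Num.Theory.

Section Aux.
Variable r : nat.

Definition tt_ (n i : nat) : nat := 'C(n, i) * r ^ i.
Definition S (k n : nat) : nat := \sum_(i < k) tt_ n i.

Lemma binlc m i j : i <= j -> 'C(m, j.+1) * 'C(m, i) <= 'C(m, j) * 'C(m, i.+1).
Proof.
move=> hij.
have h1 := mul_bin_left m j. have h2 := mul_bin_left m i.
rewrite -(@leq_pmul2r (i.+1 * j.+1)) //.
have -> : 'C(m, j.+1) * 'C(m, i) * (i.+1 * j.+1) = (j.+1 * 'C(m, j.+1)) * 'C(m, i) * i.+1 by ring.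
have -> : 'C(m, j) * 'C(m, i.+1) * (i.+1 * j.+1) = (i.+1 * 'C(m, i.+1)) * 'C(m, j) * j.+1 by ring.
rewrite h1 h2.
have -> : (m - j) * 'C(m, j) * 'C(m, i) * i.+1 = ('C(m, j) * 'C(m, i)) * ((m - j) * i.+1) by ring.
have -> : (m - i) * 'C(m, i) * 'C(m, j) * j.+1 = ('C(m, j) * 'C(m, i)) * ((m - i) * j.+1) by ring.
apply: leq_mul => //. nia.
Qed.

Lemma tlc n i k : i <= k -> tt_ n k.+1 * tt_ n i <= tt_ n k * tt_ n i.+1.
Proof.
move=> hik; rewrite /tt_.
have -> : 'C(n, k.+1) * r ^ k.+1 * ('C(n, i) * r ^ i) = ('C(n, k.+1) * 'C(n, i)) * r ^ (k.+1 + i) by rewrite expnD; ring.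
have -> : 'C(n, k) * r ^ k * ('C(n, i.+1) * r ^ i.+1) = ('C(n, k) * 'C(n, i.+1)) * r ^ (k.+1 + i) by rewrite addSnnS expnD; ring.
by rewrite leq_mul2r binlc ?orbT.
Qed.

Lemma SS k n : S k.+1 n = S k n + tt_ n k.
Proof. by rewrite /S big_ord_recr. Qed.

Lemma SSl k n : S k.+1 n = tt_ n 0 + \sum_(i < k) tt_ n i.+1.
Proof. by rewrite /S big_ord_recl. Qed.

Lemma Slc k n : S k n * S k.+2 n <= S k.+1 n * S k.+1 n.
Proof.
have key : tt_ n k.+1 * S k n <= tt_ n k * S k.+1 n.
  rewrite /S !big_distrr /= big_ord_recl /=.
  apply: leq_trans (leq_addl _ _).
  apply: leq_sum => i _; exact: tlc (ltnW (ltn_ord i)).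
rewrite (SS k.+1) (SS k n) in key *. nia.
Qed.

Lemma Srec k n : S k.+1 n.+1 = S k.+1 n + r * S k n.
Proof.
rewrite !SSl /tt_ !bin0 !expn0 big_distrr /= -addnA; congr (_ + _).
rewrite -big_split /=; apply: eq_bigr => i _.
rewrite /tt_ binS expnS; ring.
Qed.

Lemma S0 n : S 0 n = 0. Proof. by rewrite /S big_ord0. Qed.
Lemma S1 n : S 1 n = 1. Proof. by rewrite /S big_ord1 /tt_ bin0 expn0. Qed.

Lemma Spos k n : 0 < S k.+1 n.
Proof. by rewrite SSl /tt_ bin0 expn0. Qed.

Lemma Slocal k m : S k m * S k m.+2 <= S k m.+1 * S k m.+1.
Proof.
case: k => [|[|i]]; first by rewrite !S0.
  by rewrite !S1.
have hb := Slc i m.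
rewrite !(Srec i.+1) !(Srec i).
set a := S i.+2 m in hb *; set b := S i.+1 m in hb *; set c := S i m in hb *.
have : r * r * (c * a) <= r * r * (b * b) by rewrite leq_mul2l hb orbT.
nia.
Qed.

Lemma Sglobal k a d : S k.+1 a * S k.+1 (a + d).+1 <= S k.+1 a.+1 * S k.+1 (a + d).
Proof.
elim: d => [|d IH]; first by rewrite addn0 mulnC.
have hl := Slocal k.+1 (a + d).
rewrite addnS.
have p1 := Spos k (a + d). have p2 := Spos k (a + d).+1.
rewrite -(@leq_pmul2r (S k.+1 (a + d) * S k.+1 (a + d).+1)); last by rewrite muln_gt0 p1 p2.
have := leq_mul IH hl. nia.
Qed.

End Aux.

Local Open Scope ring_scope.

Lemma hbS q n e : hamming_ball q n e = (S (q - 1) e.+1 n)%:R.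
Proof.
by rewrite /hamming_ball /S big_mkord natr_sum.
Qed.

Theorem lemma1 (q e n1 n2 : nat) :
  (2 <= q)%N -> (1 <= n1)%N -> (n1 <= n2)%N ->
  B_H q n1 e * B_H q n2 e <= B_H q n1.-1 e * B_H q n2.+1 e.
Proof.
move=> hq hn1 hn12.
case: n1 hn1 hn12 => // a _ hn12.
have [d ->] : exists d, n2 = (a + d).+1 by exists (n2 - a.+1)%N; lia.
rewrite /B_H !hbS !mulf_div /=.
have hg := Sglobal (q - 1) e a d.+1.
rewrite addnS in hg.
have P n : 0 < (S (q - 1) e.+1 n)%:R :> rat by rewrite ltr0n Spos.
have -> : (q ^ a)%:R * (q ^ (a + d).+2)%:R = (q ^ a.+1)%:R * (q ^ (a + d).+1)%:R :> rat.
  by rewrite -!natrM -!expnD addSnnS.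
rewrite ler_pdivrMr ?mulr_gt0 ?P // mulrAC ler_pdivlMr ?mulr_gt0 ?P //.
rewrite -!natrM ler_nat leq_mul2l.
by rewrite hg orbT.
Qed.
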